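(* For all $\nu\in\mathbb C$, integers $m\ge0$ and $x\in\mathbb C\setminus\{0\}$, $$x^mR_{m,\nu}(x;q)=\sum_{n=0}^m x^{2n}\sum_{j=0}^{m-n}\frac{(q^{n-m};q)_j(q^{n+1};q)_j}{(q;q)_j(q;q)_j}\,q^{j(\nu+m-n)}.$$ If moreover $q^{\nu+i}\ne1$ for all integers $i\ge0$, then $$R_{m,\nu}(x;q)=\sum_{n=0}^m x^{2n-m}\frac{(q^\nu;q)_{m-n}}{(q;q)_n}\sum_{j=0}^{n}\frac{(q^{-n};q)_j(q^{\nu+m-n};q)_j}{(q;q)_j(q^\nu;q)_j}\,q^{j(n+1)}.$$
   Context: Fix $0<q<1$; $(a;q)_0=1$, $(a;q)_k=\prod_{i=0}^{k-1}(1-aq^i)$. The $q$-Lommel functions $R_{m,\nu}(x;q)$ are defined by $R_{-1,\nu}=0$, $R_{0,\nu}=1$ and $R_{m+1,\nu}(x;q)=\big(x+\frac{1-q^\nu}{x}\big)R_{m,\nu+1}(x;q)-R_{m-1,\nu+2}(x;q)$ for $m\ge0$. *)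

(* Defs.v *)
From Stdlib Require Import Reals.
From Coquelicot Require Import Coquelicot.
Open Scope R_scope.

(* complex power of the real base q>0 : q^z := exp(z ln q) *)
Definition qpow (q : R) (z : C) : C :=
  (exp (Re z * ln q) * cos (Im z * ln q), exp (Re z * ln q) * sin (Im z * ln q)).

Fixpoint qpoch (a : C) (q : R) (k : nat) : C :=
  match k with
  | O => RtoC 1
  | S k' => Cmult (qpoch a q k') (Cminus (RtoC 1) (Cmult a (RtoC (q ^ k'))))
  end.

(* q-Lommel functions R_{m,nu}(x;q), via
   R_{-1,nu}=0, R_{0,nu}=1,
   R_{m+1,nu} = (x + (1-q^nu)/x) R_{m,nu+1} - R_{m-1,nu+2}. *)
Fixpoint qLommel (q : R) (m : nat) (nu : C) (x : C) : C :=
  match m with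
  | O => RtoC 1
  | S m' =>
    let c := Cplus x (Cdiv (Cminus (RtoC 1) (qpow q nu)) x) in
    match m' with
    | O => Cminus (Cmult c (RtoC 1)) (RtoC 0)
    | S m'' => Cminus (Cmult c (qLommel q m' (Cplus nu (RtoC 1)) x))
                      (qLommel q m'' (Cplus nu (RtoC 2)) x)
    end
  end.

(* Main.v *)
Require Import Defs.
From Stdlib Require Import Reals Lra Lia.
From Coquelicot Require Import Coquelicot.
Open Scope R_scope.


Fixpoint qf (q : R) (n : nat) : R :=
  match n with O => 1 | S n' => qf q n' * (1 - q ^ (S n')) end.
Fixpoint gb (q : R) (n k : nat) : R :=
  match n, k with
  | O, O => 1
  | O, S _ => 0
  | S _, O => 1
  | S n', S k' => gb q n' k' + q ^ (S k') * gb q n' (S k')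
  end.
Fixpoint sg (q : R) (j : nat) : R :=
  match j with O => 1 | S j' => - (q ^ j') * sg q j' end.
Fixpoint rpoch (a q : R) (j : nat) : R :=
  match j with O => 1 | S j' => rpoch a q j' * (1 - a * q ^ j') end.

Lemma qf_S q n : qf q (S n) = qf q n * (1 - q ^ (S n)).
Proof. reflexivity. Qed.
Lemma rpoch_S a q j : rpoch a q (S j) = rpoch a q j * (1 - a * q ^ j).
Proof. reflexivity. Qed.
Lemma sg_S q j : sg q (S j) = - (q ^ j) * sg q j.
Proof. reflexivity. Qed.
Lemma gb_SS q n k : gb q (S n) (S k) = gb q n k + q ^ (S k) * gb q n (S k).
Proof. reflexivity. Qed.

Lemma powS_lt1 q n : 0 < q < 1 -> 0 < 1 - q ^ (S n).
Proof. intros H. assert (0 <= q ^ S n < 1) by (apply pow_lt_1_compat; lra || lia). lra. Qed.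

Lemma qf_pos q n : 0 < q < 1 -> 0 < qf q n.
Proof. intros H; induction n; simpl qf. lra. apply Rmult_lt_0_compat; auto. apply (powS_lt1 q n H). Qed.

Lemma qf_nz q n : 0 < q < 1 -> qf q n <> 0.
Proof. intros H; apply Rgt_not_eq, qf_pos, H. Qed.

Lemma gb_n_0 q n : gb q n 0 = 1.
Proof. destruct n; reflexivity. Qed.

Lemma gb_out q n : forall k, (n < k)%nat -> gb q n k = 0.
Proof.
  induction n; intros k Hk; destruct k; try lia; simpl; auto.
  rewrite !IHn by lia. ring.
Qed.

Lemma gb_prod q n : forall k, (k <= n)%nat -> gb q n k * qf q k * qf q (n - k) = qf q n.
Proof.
  induction n; intros k Hk.
  - destruct k; [simpl; ring | lia].
  - destruct k.
    + simpl. rewrite ?gb_n_0. ring.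
    + rewrite gb_SS. replace (S n - S k)%nat with (n - k)%nat by lia.
      destruct (Nat.eq_dec k n) as [->|Hne].
      * rewrite (gb_out q n (S n)) by lia. rewrite Nat.sub_diag.
        pose proof (IHn n (le_n n)) as E. rewrite Nat.sub_diag in E.
        rewrite qf_S. cbn [qf] in E. change (qf q 0) with 1; transitivity ((gb q n n * qf q n * 1) * (1 - q ^ S n)). ring. rewrite E. ring.
      * pose proof (IHn k ltac:(lia)) as E1.
        pose proof (IHn (S k) ltac:(lia)) as E2.
        replace (n - k)%nat with (S (n - S k)) in E1 |- * by lia.
        rewrite !qf_S in *.
        assert (HP : q ^ S k * q ^ (S (n - S k)) = q ^ S n).
        { rewrite <- pow_add. f_equal. lia. }
        transitivity ((gb q n k * qf q k * (qf q (n - S k) * (1 - q ^ S (n - S k)))) * (1 - q ^ S k)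
          + q ^ S k * (1 - q ^ S (n - S k)) * (gb q n (S k) * (qf q k * (1 - q ^ S k)) * qf q (n - S k))).
        { ring. }
        rewrite E1, E2. rewrite <- HP. ring.
Qed.

Lemma gb_ratio q k j : 0 < q < 1 -> (j < k)%nat ->
  gb q k (S j) * (1 - q ^ (S j)) = gb q k j * (1 - q ^ (k - j)).
Proof.
  intros Hq Hj.
  pose proof (gb_prod q k (S j) ltac:(lia)) as E1.
  pose proof (gb_prod q k j ltac:(lia)) as E2.
  replace (k - j)%nat with (S (k - S j)) in E2 |- * by lia.
  rewrite !qf_S in E1, E2.
  apply (Rmult_eq_reg_r (qf q j * qf q (k - S j))).
  2: { apply Rmult_integral_contrapositive; split; apply qf_nz; auto. }
  transitivity (gb q k (S j) * (qf q j * (1 - q ^ S j)) * qf q (k - S j)). ring.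
  rewrite E1, <- E2. ring.
Qed.

Lemma RR1 q k : 0 < q < 1 -> forall j, (j <= k)%nat ->
  rpoch (/ q ^ k) q j * (q ^ k) ^ j = sg q j * gb q k j * qf q j.
Proof.
  intros Hq; induction j; intros Hj.
  - simpl. rewrite gb_n_0. ring.
  - rewrite rpoch_S, sg_S, qf_S. change ((q ^ k) ^ (S j)) with (q ^ k * (q ^ k) ^ j).
    assert (Hqk : q ^ k <> 0) by (apply pow_nonzero; lra).
    assert (HP : q ^ j * q ^ (k - j) = q ^ k) by (rewrite <- pow_add; f_equal; lia).
    transitivity ((rpoch (/ q ^ k) q j * (q ^ k) ^ j) * (q ^ k - q ^ j)).
    { field. auto. }
    rewrite IHj by lia.
    transitivity (- q ^ j * sg q j * qf q j * (gb q k (S j) * (1 - q ^ S j))). 2: { simpl. ring. }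
    rewrite gb_ratio by (auto; lia). rewrite <- HP. ring.
Qed.

Lemma RR2 q n : 0 < q < 1 -> forall j,
  rpoch (q ^ (S n)) q j = gb q (n + j) j * qf q j.
Proof.
  intros Hq; induction j.
  - simpl. rewrite gb_n_0. ring.
  - rewrite rpoch_S, IHj, qf_S.
    pose proof (gb_prod q (S (n + j)) (S j) ltac:(lia)) as E1.
    pose proof (gb_prod q (n + j) j ltac:(lia)) as E2.
    replace (S (n + j) - S j)%nat with n in E1 by lia.
    replace (n + j - j)%nat with n in E2 by lia.
    rewrite <- plus_n_Sm.
    rewrite qf_S in E1.
    apply (Rmult_eq_reg_r (qf q n)). 2: apply qf_nz; auto.
    transitivity (gb q (n + j) j * qf q j * qf q n * (1 - q ^ S n * q ^ j)). ring.
    rewrite E2.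
    transitivity (gb q (S (n + j)) (S j) * (qf q j * (1 - q ^ S j)) * qf q n). 2: ring.
    rewrite E1. rewrite <- pow_add. replace (S n + j)%nat with (S (n + j)) by lia. rewrite qf_S. ring.
Qed.

Lemma gb_sym q a b : 0 < q < 1 -> gb q (a + b) a = gb q (a + b) b.
Proof.
  intros Hq.
  pose proof (gb_prod q (a + b) a ltac:(lia)) as E1.
  pose proof (gb_prod q (a + b) b ltac:(lia)) as E2.
  replace (a + b - a)%nat with b in E1 by lia.
  replace (a + b - b)%nat with a in E2 by lia.
  apply (Rmult_eq_reg_r (qf q a * qf q b)).
  2: { apply Rmult_integral_contrapositive; split; apply qf_nz; auto. }
  transitivity (gb q (a + b) a * qf q a * qf q b). ring. rewrite E1, <- E2. ring.
Qed.


Fixpoint csum (f : nat -> C) (n : nat) : C :=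
  match n with O => f O | S n' => Cplus (csum f n') (f (S n')) end.

Lemma sum_n_csum f n : sum_n f n = csum f n.
Proof. induction n. rewrite sum_O; reflexivity. rewrite sum_Sn, IHn. reflexivity. Qed.

Lemma csum_ext f g n : (forall i, (i <= n)%nat -> f i = g i) -> csum f n = csum g n.
Proof. induction n; intros H; simpl. apply H; lia. rewrite IHn, H; auto. Qed.

Lemma csum_plus f g n : csum (fun i => Cplus (f i) (g i)) n = Cplus (csum f n) (csum g n).
Proof. induction n; simpl; auto. rewrite IHn. ring. Qed.

Lemma csum_minus f g n : csum (fun i => Cminus (f i) (g i)) n = Cminus (csum f n) (csum g n).
Proof. induction n; simpl; auto. rewrite IHn. ring. Qed.

Lemma csum_scal c f n : csum (fun i => Cmult c (f i)) n = Cmult c (csum f n).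
Proof. induction n; simpl; auto. rewrite IHn. ring. Qed.

Lemma csum_shift f n : csum f (S n) = Cplus (f O) (csum (fun i => f (S i)) n).
Proof. induction n. simpl. ring. change (csum f (S (S n))) with (Cplus (csum f (S n)) (f (S (S n)))).
  rewrite IHn. simpl. ring. Qed.

Lemma csum_extend f n N : (n <= N)%nat -> (forall i, (n < i)%nat -> (i <= N)%nat -> f i = RtoC 0) ->
  csum f N = csum f n.
Proof.
  induction N; intros Hn H.
  - replace n with O by lia. reflexivity.
  - destruct (Nat.eq_dec n (S N)) as [->|Hne]. reflexivity.
    simpl. rewrite IHN by (auto; lia). rewrite H by lia. ring.
Qed.

Lemma csum_switch (u : nat -> nat -> C) m n :
  csum (fun i => csum (u i) n) m = csum (fun j => csum (fun i => u i j) m) n.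
Proof.
  rewrite <- !sum_n_csum.
  transitivity (sum_n (fun i => sum_n (u i) n) m).
  { apply sum_n_ext. intros; symmetry; apply sum_n_csum. }
  rewrite sum_n_switch. apply sum_n_ext. intros; apply sum_n_csum.
Qed.

Definition E q r := exp (r * ln q).

Lemma qpow_R q r : qpow q (RtoC r) = RtoC (E q r).
Proof.
  unfold qpow, E, RtoC. simpl. rewrite Rmult_0_l, cos_0, sin_0. f_equal; ring.
Qed.

Lemma qpow_plus q z w : qpow q (Cplus z w) = Cmult (qpow q z) (qpow q w).
Proof.
  destruct z as [a b], w as [c d]. unfold qpow, Cplus, Cmult. simpl.
  rewrite !Rmult_plus_distr_r, exp_plus, cos_plus, sin_plus. f_equal; ring.
Qed.

Lemma qpow_0 q : qpow q (RtoC 0) = RtoC 1.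
Proof. rewrite qpow_R. unfold E. rewrite Rmult_0_l, exp_0. reflexivity. Qed.

Lemma qpow_nat_mult q j z : qpow q (Cmult (RtoC (INR j)) z) = Cpow (qpow q z) j.
Proof.
  induction j.
  - simpl. replace (Cmult (RtoC 0) z) with (RtoC 0) by ring. apply qpow_0.
  - rewrite S_INR. replace (Cmult (RtoC (INR j + 1)) z) with (Cplus (Cmult (RtoC (INR j)) z) z)
      by (rewrite RtoC_plus; ring).
    rewrite qpow_plus, IHj. simpl. ring.
Qed.

Lemma E_nat q n : 0 < q -> E q (INR n) = q ^ n.
Proof. intros H. unfold E. rewrite <- (Rpower_pow n q H). reflexivity. Qed.

Lemma E_opp_nat q n : 0 < q -> E q (- INR n) = / q ^ n.
Proof. intros H. unfold E. rewrite Ropp_mult_distr_l_reverse, exp_Ropp. f_equal. apply E_nat; auto. Qed.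

Lemma qpoch_S a q k : qpoch a q (S k) = Cmult (qpoch a q k) (Cminus (RtoC 1) (Cmult a (RtoC (q ^ k)))).
Proof. reflexivity. Qed.

Lemma qpoch_R a q j : qpoch (RtoC a) q j = RtoC (rpoch a q j).
Proof.
  induction j. reflexivity.
  rewrite qpoch_S, rpoch_S, IHj. rewrite RtoC_mult, RtoC_minus, RtoC_mult. reflexivity.
Qed.

Lemma rpoch_q q j : rpoch q q j = qf q j.
Proof. induction j. reflexivity. rewrite rpoch_S, qf_S, IHj. reflexivity. Qed.

Lemma qpoch_split a q k j : qpoch a q (k + j) = Cmult (qpoch a q k) (qpoch (Cmult a (RtoC (q ^ k))) q j).
Proof.
  induction j.
  - rewrite Nat.add_0_r. simpl. ring.
  - rewrite Nat.add_succ_r, !qpoch_S, IHj, pow_add, RtoC_mult. ring.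
Qed.

Lemma qpoch_front a q k : qpoch a q (S k) = Cmult (Cminus (RtoC 1) a) (qpoch (Cmult a (RtoC q)) q k).
Proof.
  change (S k) with (1 + k)%nat. rewrite qpoch_split. simpl. rewrite Rmult_1_r. f_equal. ring.
Qed.

Lemma qbin q : forall k z, qpoch z q k = csum (fun i => Cmult (RtoC (sg q i * gb q k i)) (Cpow z i)) k.
Proof.
  induction k; intros z.
  - simpl. rewrite Rmult_1_l. ring.
  - rewrite qpoch_front, IHk.
    set (F := fun i => Cmult (RtoC (sg q i * gb q k i)) (Cpow (Cmult z (RtoC q)) i)).
    assert (HF : csum F (S k) = csum F k).
    { apply csum_extend. lia. intros i Hi Hi2. unfold F. rewrite (gb_out q k i) by lia.
      rewrite Rmult_0_r. ring. }
    rewrite csum_shift. rewrite <- HF. rewrite (csum_shift F).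
    assert (H0 : F O = RtoC 1). { unfold F. rewrite gb_n_0. simpl. rewrite Rmult_1_l. ring. }
    assert (HS : forall i, Cmult (RtoC (sg q (S i) * gb q (S k) (S i))) (Cpow z (S i))
       = Cplus (F (S i)) (Cmult (Copp z) (F i))).
    { intros i. unfold F. rewrite gb_SS, sg_S, !Cpow_mult_l, <- !RtoC_pow.
      change (q ^ S i) with (q * q ^ i). change (Cpow z (S i)) with (Cmult z (Cpow z i)).
      rewrite ?RtoC_mult, ?RtoC_plus, ?RtoC_mult, ?RtoC_opp, ?RtoC_mult. ring. }
    rewrite (csum_ext _ _ _ (fun i _ => HS i)). rewrite csum_plus, csum_scal.
    rewrite <- HF, (csum_shift F), H0. simpl. rewrite Rmult_1_r. ring.
Qed.


Definition cA q k n j := sg q j * gb q k j * gb q (n + j) j.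
Definition A q k n (t : C) := csum (fun j => Cmult (RtoC (cA q k n j)) (Cpow t j)) k.

Lemma A_ext q k n t N : (k <= N)%nat ->
  A q k n t = csum (fun j => Cmult (RtoC (cA q k n j)) (Cpow t j)) N.
Proof.
  intros H. unfold A. symmetry. apply csum_extend; auto.
  intros i H1 H2. unfold cA. rewrite (gb_out q k i) by lia. rewrite Rmult_0_r, Rmult_0_l. ring.
Qed.

Lemma coef_rec q k n j :
  cA q (S k) (S n) (S j) = cA q k (S n) (S j) * q ^ (S j) - cA q k (S n) j * q ^ j
     + cA q (S k) n (S j) * q ^ (S j) - cA q k n (S j) * (q * q) ^ (S j).
Proof.
  unfold cA. rewrite <- !plus_n_Sm. change (S n + j)%nat with (S (n + j)).
  rewrite !gb_SS, !sg_S. rewrite Rpow_mult_distr. change (q ^ S j) with (q * q ^ j). ring.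
Qed.

Lemma A_rec q k n t :
  A q (S k) (S n) t = Cminus (Cplus (Cmult (Cminus (RtoC 1) t) (A q k (S n) (Cmult t (RtoC q))))
      (A q (S k) n (Cmult t (RtoC q)))) (A q k n (Cmult t (RtoC (q * q)))).
Proof.
  rewrite (A_ext q k (S n) _ (S k)) by lia. rewrite (A_ext q k n _ (S k)) by lia. unfold A at 1 2.
  set (D := fun j => match j with O => RtoC 0 | S j' =>
          Cmult (RtoC (cA q k (S n) j' * q ^ j')) (Cpow t (S j')) end).
  assert (HD : Cmult t (csum (fun j => Cmult (RtoC (cA q k (S n) j)) (Cpow (Cmult t (RtoC q)) j)) (S k))
     = csum D (S k)).
  { rewrite <- csum_scal. rewrite csum_extend with (n := k); [| lia |].
    2: { intros i H1 H2. unfold cA. rewrite (gb_out q k i) by lia. rewrite Rmult_0_r, Rmult_0_l. ring. }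
    rewrite csum_shift. simpl D at 1. rewrite Cplus_0_l. apply csum_ext. intros i _. simpl D.
    rewrite Cpow_mult_l, <- RtoC_pow, RtoC_mult. change (Cpow t (S i)) with (Cmult t (Cpow t i)). ring. }
  replace (Cmult (Cminus (RtoC 1) t) (csum (fun j => Cmult (RtoC (cA q k (S n) j)) (Cpow (Cmult t (RtoC q)) j)) (S k)))
    with (Cminus (csum (fun j => Cmult (RtoC (cA q k (S n) j)) (Cpow (Cmult t (RtoC q)) j)) (S k))
            (Cmult t (csum (fun j => Cmult (RtoC (cA q k (S n) j)) (Cpow (Cmult t (RtoC q)) j)) (S k)))) by ring.
  rewrite HD. rewrite <- !csum_minus, <- csum_plus, <- csum_minus.
  apply csum_ext. intros j _. rewrite !Cpow_mult_l, <- !RtoC_pow. destruct j as [|j].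
  - simpl D. unfold cA. rewrite !gb_n_0. simpl. rewrite !Rmult_1_r. ring.
  - simpl D. rewrite coef_rec. change (Cpow t (S j)) with (Cmult t (Cpow t j)).
    change (q ^ S j) with (q * q ^ j).

    repeat (rewrite RtoC_minus || rewrite RtoC_plus || rewrite RtoC_mult). ring.
Qed.

Lemma A_k0 q k t : A q k 0 t = qpoch t q k.
Proof.
  rewrite qbin. unfold A. apply csum_ext. intros i _. unfold cA. simpl Nat.add.
  replace (gb q i i) with 1. rewrite Rmult_1_r. reflexivity.
  induction i. reflexivity. rewrite gb_SS, <- IHi, gb_out by lia. ring.
Qed.

Lemma A_0n q n t : A q 0 n t = RtoC 1.
Proof. unfold A, cA. simpl. rewrite Nat.add_0_r, gb_n_0. rewrite !Rmult_1_r. ring. Qed.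

Lemma A_S0 q k t : A q (S k) 0 t = Cmult (Cminus (RtoC 1) t) (A q k 0 (Cmult t (RtoC q))).
Proof. rewrite !A_k0. apply qpoch_front. Qed.

Lemma csum_S f n : csum f (S n) = Cplus (csum f n) (f (S n)).
Proof. reflexivity. Qed.

Definition Pm q (x : C) m t := csum (fun n => Cmult (Cpow (Cmult x x) n) (A q (m - n) n t)) m.

Lemma Pm_rec q x m t :
  Pm q x (S (S m)) t = Cminus (Cmult (Cplus (Cmult x x) (Cminus (RtoC 1) t)) (Pm q x (S m) (Cmult t (RtoC q))))
     (Cmult (Cmult x x) (Pm q x m (Cmult t (RtoC (q * q))))).
Proof.
  set (y := Cmult x x).
  set (U := csum (fun n => Cmult (Cpow y n) (A q (m - n) (S n) (Cmult t (RtoC q)))) m).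
  set (V := csum (fun n => Cmult (Cpow y n) (A q (S m - n) n (Cmult t (RtoC q)))) m).
  set (W := csum (fun n => Cmult (Cpow y n) (A q (m - n) n (Cmult t (RtoC (q * q))))) m).
  assert (HL : Pm q x (S (S m)) t = Cplus (Cplus (Cmult (Cminus (RtoC 1) t) (A q (S m) 0 (Cmult t (RtoC q))))
      (Cmult y (Cminus (Cplus (Cmult (Cminus (RtoC 1) t) U) V) W))) (Cpow y (S (S m)))).
  { unfold Pm. fold y. rewrite csum_shift. simpl (Cpow y 0). rewrite Nat.sub_0_r, A_S0.
    change (csum (fun i => Cmult (Cpow y (S i)) (A q (S (S m) - S i) (S i) t)) (S m))
      with (Cplus (csum (fun i => Cmult (Cpow y (S i)) (A q (S m - i) (S i) t)) m)
                  (Cmult (Cpow y (S (S m))) (A q (S m - S m) (S (S m)) t))).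
    rewrite Nat.sub_diag, A_0n.
    unfold U, V, W. rewrite <- !csum_scal, <- csum_plus, <- csum_minus, <- csum_scal.
    assert (E : csum (fun i => Cmult (Cpow y (S i)) (A q (S m - i) (S i) t)) m =
       csum (fun i => Cmult y (Cminus (Cplus (Cmult (Cminus (RtoC 1) t)
          (Cmult (Cpow y i) (A q (m - i) (S i) (Cmult t (RtoC q)))))
          (Cmult (Cpow y i) (A q (S m - i) i (Cmult t (RtoC q)))))
          (Cmult (Cpow y i) (A q (m - i) i (Cmult t (RtoC (q * q))))))) m).
    { apply csum_ext. intros i Hi. replace (S m - i)%nat with (S (m - i)) by lia.
      rewrite A_rec. change (Cpow y (S i)) with (Cmult y (Cpow y i)). ring. }
    rewrite E. ring. }
  assert (HS1a : Pm q x (S m) (Cmult t (RtoC q)) = Cplus (A q (S m) 0 (Cmult t (RtoC q))) (Cmult y U)).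
  { unfold Pm. fold y. rewrite csum_shift. simpl (Cpow y 0). rewrite Nat.sub_0_r. unfold U.
    rewrite <- csum_scal. f_equal. ring. apply csum_ext. intros i _. simpl. ring. }
  assert (HS1b : Pm q x (S m) (Cmult t (RtoC q)) = Cplus V (Cpow y (S m))).
  { unfold Pm. fold y. rewrite csum_S. rewrite Nat.sub_diag, A_0n. unfold V. ring. }
  assert (HW : Pm q x m (Cmult t (RtoC (q * q))) = W) by reflexivity.
  rewrite HL, HW. fold y.
  transitivity (Cminus (Cplus (Cmult y (Pm q x (S m) (Cmult t (RtoC q))))
                  (Cmult (Cminus (RtoC 1) t) (Pm q x (S m) (Cmult t (RtoC q))))) (Cmult y W)).
  2: ring.
  rewrite HS1b at 1. rewrite HS1a. change (Cpow y (S (S m))) with (Cmult y (Cpow y (S m))). ring.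
Qed.


Lemma qpow_shift1 q nu : 0 < q -> qpow q (Cplus nu (RtoC 1)) = Cmult (qpow q nu) (RtoC q).
Proof. intros H. rewrite qpow_plus, qpow_R. unfold E. rewrite Rmult_1_l, exp_ln; auto. Qed.

Lemma qpow_shift2 q nu : 0 < q -> qpow q (Cplus nu (RtoC 2)) = Cmult (qpow q nu) (RtoC (q * q)).
Proof. intros H. rewrite qpow_plus, qpow_R. unfold E.
  replace (2 * ln q) with (ln q + ln q) by ring. rewrite exp_plus, exp_ln; auto. Qed.

Lemma qLommel_SS q m nu x : qLommel q (S (S m)) nu x =
  Cminus (Cmult (Cplus x (Cdiv (Cminus (RtoC 1) (qpow q nu)) x)) (qLommel q (S m) (Cplus nu (RtoC 1)) x))
         (qLommel q m (Cplus nu (RtoC 2)) x).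
Proof. reflexivity. Qed.

Lemma Lommel_Pm q x (hq : 0 < q) (hx : x <> RtoC 0) : forall m nu,
  Cmult (Cpow x m) (qLommel q m nu x) = Pm q x m (qpow q nu) /\
  Cmult (Cpow x (S m)) (qLommel q (S m) nu x) = Pm q x (S m) (qpow q nu).
Proof.
  induction m; intros nu.
  - split.
    + unfold Pm. simpl. rewrite A_0n. ring.
    + unfold Pm. simpl csum. rewrite A_0n. simpl Nat.sub. rewrite A_k0. simpl qpoch.
      simpl. field. auto.
  - split. apply IHm.
    rewrite qLommel_SS, Pm_rec, <- qpow_shift1, <- qpow_shift2 by auto.
    destruct (IHm (Cplus nu (RtoC 1))) as [_ H1].
    destruct (IHm (Cplus nu (RtoC 2))) as [H2 _].
    rewrite <- H1, <- H2. change (Cpow x (S (S m))) with (Cmult x (Cmult x (Cpow x m))).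
    change (Cpow x (S m)) with (Cmult x (Cpow x m)). field. auto.
Qed.

Lemma RtoC_nz r : r <> 0 -> RtoC r <> RtoC 0.
Proof. intros H E. apply H. apply (f_equal Re) in E. simpl in E. exact E. Qed.

Lemma qpow_sub q m n : 0 < q -> (n <= m)%nat -> qpow q (RtoC (INR n - INR m)) = RtoC (/ q ^ (m - n)).
Proof. intros H Hn. rewrite qpow_R. rewrite <- E_opp_nat by auto. f_equal. f_equal.
  rewrite minus_INR by auto. ring. Qed.

Lemma qpow_nat q n : 0 < q -> qpow q (RtoC (INR n)) = RtoC (q ^ n).
Proof. intros H. rewrite qpow_R, E_nat; auto. Qed.

Lemma term1 q (hq : 0 < q < 1) nu m n j : (n <= m)%nat -> (j <= m - n)%nat ->
  Cmult (Cdiv (Cmult (qpoch (qpow q (RtoC (INR n - INR m))) q j)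
                     (qpoch (qpow q (RtoC (INR n + 1))) q j))
              (Cmult (qpoch (RtoC q) q j) (qpoch (RtoC q) q j)))
        (qpow q (Cmult (RtoC (INR j)) (Cplus nu (RtoC (INR m - INR n)))))
  = Cmult (RtoC (cA q (m - n) n j)) (Cpow (qpow q nu) j).
Proof.
  intros Hn Hj.
  rewrite qpow_sub by (lra || auto). rewrite <- S_INR, qpow_nat by lra.
  rewrite <- minus_INR by auto. rewrite qpow_nat_mult, qpow_plus, qpow_nat by lra.
  rewrite !qpoch_R, rpoch_q. rewrite Cpow_mult_l, <- RtoC_pow.
  assert (Hc : cA q (m - n) n j = (rpoch (/ q ^ (m - n)) q j * (q ^ (m - n)) ^ j) * rpoch (q ^ (S n)) q j
                  / (qf q j * qf q j)).
  { rewrite (RR1 q (m - n) hq j Hj), (RR2 q n hq j). unfold cA. field. apply qf_nz; auto. }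
  rewrite Hc. pose proof (qf_nz q j hq) as Hf.
  assert (Hff : qf q j * qf q j <> 0) by (apply Rmult_integral_contrapositive; split; auto).
  rewrite (RtoC_div _ _ Hff).
  rewrite !RtoC_mult. field. apply RtoC_nz; auto.
Qed.

Lemma Cpow_2n x n : Cpow x (2 * n) = Cpow (Cmult x x) n.
Proof. induction n. reflexivity. replace (2 * S n)%nat with (S (S (2 * n))) by lia.
  change (Cpow x (S (S (2 * n)))) with (Cmult x (Cmult x (Cpow x (2 * n)))). rewrite IHn. change (Cpow (Cmult x x) (S n)) with (Cmult (Cmult x x) (Cpow (Cmult x x) n)). ring. Qed.

Lemma ident1 q (hq : 0 < q < 1) nu m x (hx : x <> RtoC 0) :
  Cmult (Cpow x m) (qLommel q m nu x) =
    sum_n (fun n : nat =>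
      Cmult (Cpow x (2 * n))
        (sum_n (fun j : nat =>
           Cmult
             (Cdiv (Cmult (qpoch (qpow q (RtoC (INR n - INR m))) q j)
                          (qpoch (qpow q (RtoC (INR n + 1))) q j))
                   (Cmult (qpoch (RtoC q) q j) (qpoch (RtoC q) q j)))
             (qpow q (Cmult (RtoC (INR j)) (Cplus nu (RtoC (INR m - INR n))))))
          (m - n)%nat)) m.
Proof.
  destruct (Lommel_Pm q x ltac:(lra) hx m nu) as [H _]. rewrite H.
  rewrite sum_n_csum. unfold Pm. apply csum_ext. intros n Hn.
  rewrite Cpow_2n, sum_n_csum. f_equal. unfold A. apply csum_ext. intros j Hj.
  symmetry. apply term1; auto.
Qed.


Lemma pow_tri q i j : (q ^ j) ^ i * q ^ j = (q ^ (S i)) ^ j.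
Proof. rewrite <- !pow_mult. rewrite <- pow_add. f_equal. lia. Qed.

Lemma inner_sum q (hq : 0 < q < 1) k n t i :
  csum (fun j => Cmult (RtoC (sg q j * gb q n j * q ^ j / qf q n))
                       (Cmult (RtoC (sg q i * gb q k i)) (Cpow (Cmult t (RtoC (q ^ j))) i))) n
  = Cmult (RtoC (cA q k n i)) (Cpow t i).
Proof.
  pose proof (qf_nz q n hq) as Hf.
  transitivity (Cmult (Cdiv (Cmult (RtoC (sg q i * gb q k i)) (Cpow t i)) (RtoC (qf q n)))
     (csum (fun j => Cmult (RtoC (sg q j * gb q n j)) (Cpow (RtoC (q ^ (S i))) j)) n)).
  { rewrite <- csum_scal. apply csum_ext. intros j _.
    rewrite Cpow_mult_l, <- !RtoC_pow, <- pow_tri.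
    rewrite (RtoC_div _ _ Hf), !RtoC_mult. field. apply RtoC_nz; auto. }
  rewrite <- qbin, qpoch_R, RR2 by auto. rewrite <- (gb_sym q i n hq).
  unfold cA. replace (n + i)%nat with (i + n)%nat by lia. rewrite !RtoC_mult. field. apply RtoC_nz; auto.
Qed.

Lemma B_eq q (hq : 0 < q < 1) nu m n (hn : (n <= m)%nat)
  (Hnz : forall i, qpoch (qpow q nu) q i <> RtoC 0) :
  Cmult (Cdiv (qpoch (qpow q nu) q (m - n)) (qpoch (RtoC q) q n))
          (sum_n (fun j : nat =>
             Cmult
               (Cdiv (Cmult (qpoch (qpow q (RtoC (- INR n))) q j)
                            (qpoch (qpow q (Cplus nu (RtoC (INR m - INR n)))) q j))
                     (Cmult (qpoch (RtoC q) q j) (qpoch (qpow q nu) q j)))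
               (qpow q (RtoC (INR j * (INR n + 1)))))
            n)
  = A q (m - n) n (qpow q nu).
Proof.
  set (t := qpow q nu). set (k := (m - n)%nat).
  pose proof (qf_nz q n hq) as Hfn.
  rewrite sum_n_csum, <- csum_scal.
  transitivity (csum (fun j => Cmult (RtoC (sg q j * gb q n j * q ^ j / qf q n))
                                     (qpoch (Cmult t (RtoC (q ^ j))) q k)) n).
  { apply csum_ext. intros j Hj.
    rewrite qpow_R, E_opp_nat by lra. rewrite qpow_plus. fold t.
    rewrite <- minus_INR by auto. fold k. rewrite qpow_nat by lra.
    replace (INR j * (INR n + 1)) with (INR (j * S n)) by (rewrite mult_INR, S_INR; ring).
    rewrite qpow_nat by lra. rewrite !qpoch_R, !rpoch_q.
    pose proof (qf_nz q j hq) as Hfj.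
    assert (Hs : qpoch t q (j + k) = qpoch t q (k + j)) by (f_equal; lia).
    rewrite !qpoch_split in Hs.
    assert (Hpj := Hnz j).
    assert (Hr : sg q j * gb q n j * q ^ j / qf q n =
       rpoch (/ q ^ n) q j * (q ^ n) ^ j * q ^ j / (qf q j * qf q n)).
    { rewrite (RR1 q n hq j Hj). field. auto. }
    rewrite Hr. replace (q ^ (j * S n)) with ((q ^ n) ^ j * q ^ j).
    2: { rewrite <- pow_mult, <- pow_add. f_equal. lia. }
    assert (Hff : qf q j * qf q n <> 0) by (apply Rmult_integral_contrapositive; split; auto).
    rewrite (RtoC_div _ _ Hff), !RtoC_mult.
    replace (qpoch (Cmult t (RtoC (q ^ j))) q k)
      with (Cdiv (Cmult (qpoch t q k) (qpoch (Cmult t (RtoC (q ^ k))) q j)) (qpoch t q j)).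
    2: { rewrite <- Hs. field. auto. }
    field. repeat split; auto; apply RtoC_nz; auto. }
  transitivity (csum (fun j => csum (fun i => Cmult (RtoC (sg q j * gb q n j * q ^ j / qf q n))
         (Cmult (RtoC (sg q i * gb q k i)) (Cpow (Cmult t (RtoC (q ^ j))) i))) k) n).
  { apply csum_ext. intros j _. rewrite qbin, csum_scal. reflexivity. }
  rewrite csum_switch. unfold A. apply csum_ext. intros i _. apply inner_sum; auto.
Qed.


Theorem mainTheorem15 (q : R) (hq : 0 < q < 1) (nu : C) (m : nat) (x : C) (hx : x <> RtoC 0) :
  Cmult (Cpow x m) (qLommel q m nu x) =
    sum_n (fun n : nat =>
      Cmult (Cpow x (2 * n))
        (sum_n (fun j : nat =>
           Cmult
             (Cdiv (Cmult (qpoch (qpow q (RtoC (INR n - INR m))) q j)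
                          (qpoch (qpow q (RtoC (INR n + 1))) q j))
                   (Cmult (qpoch (RtoC q) q j) (qpoch (RtoC q) q j)))
             (qpow q (Cmult (RtoC (INR j)) (Cplus nu (RtoC (INR m - INR n))))))
          (m - n)%nat)) m
  /\
  ((forall i : nat, qpow q (Cplus nu (RtoC (INR i))) <> RtoC 1) ->
   qLommel q m nu x =
    sum_n (fun n : nat =>
      Cmult (Cdiv (Cpow x (2 * n)) (Cpow x m))
        (Cmult (Cdiv (qpoch (qpow q nu) q (m - n)) (qpoch (RtoC q) q n))
          (sum_n (fun j : nat =>
             Cmult
               (Cdiv (Cmult (qpoch (qpow q (RtoC (- INR n))) q j)
                            (qpoch (qpow q (Cplus nu (RtoC (INR m - INR n)))) q j))
                     (Cmult (qpoch (RtoC q) q j) (qpoch (qpow q nu) q j)))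
               (qpow q (RtoC (INR j * (INR n + 1)))))
            n))) m).
Proof.
  split. apply ident1; auto.
  intros Hi.
  assert (Hnz : forall i, qpoch (qpow q nu) q i <> RtoC 0).
  { induction i. simpl. apply C1_nz. rewrite qpoch_S. apply Cmult_neq_0; auto.
    apply Cminus_eq_contra. intros E. apply (Hi i).
    rewrite qpow_plus, qpow_nat by lra. auto. }
  destruct (Lommel_Pm q x ltac:(lra) hx m nu) as [H _].
  assert (Hxm : Cpow x m <> RtoC 0) by (apply Cpow_nz; auto).
  assert (HL : qLommel q m nu x = Cmult (Cinv (Cpow x m)) (Pm q x m (qpow q nu))).
  { rewrite <- H. field. auto. }
  rewrite HL. unfold Pm. rewrite sum_n_csum. rewrite <- csum_scal.
  apply csum_ext. intros n Hn. rewrite (B_eq q hq nu m n Hn Hnz), Cpow_2n. unfold Cdiv. ring.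
Qed.
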